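(* The function $h_1(t)=\dfrac{\log^2(1+t)}{\log(1+t^2)}$ is strictly decreasing on $(0,1)$ and strictly increasing on $(1,\infty)$. In particular, $\log^2(1+t)\le\log(1+t^2)$ for $0<t\le1$. *)

(* Defs.v *)
From Stdlib Require Import Reals.
Open Scope R_scope.

Definition h1 (t : R) : R := (ln (1 + t)) ^ 2 / ln (1 + t ^ 2).

(* Main.v *)
Require Import Defs.
From Stdlib Require Import Reals Lra.
From Coquelicot Require Import Coquelicot.
Open Scope R_scope.

Lemma incr_aux (f f' : R -> R) (a b : R) :
  a < b -> (forall c, a <= c <= b -> is_derive f c (f' c)) ->
  (forall c, a < c < b -> 0 < f' c) -> f a < f b.
Proof.
  intros Hab Hd Hp.
  destruct (MVT_cor2 f f' a b Hab) as [c [Hc Hc2]].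
  { intros c Hc; apply is_derive_Reals; auto. }
  assert (0 < f' c * (b - a)) by (apply Rmult_lt_0_compat; [apply Hp; auto | lra]).
  lra.
Qed.

Lemma ln_lt_self x : 0 < x -> ln (1 + x) < x.
Proof.
  intros Hx. rewrite <- (ln_exp x) at 2.
  apply ln_increasing; [lra|]. apply exp_ineq1; lra.
Qed.

Lemma ln_pos x : 1 < x -> 0 < ln x.
Proof. intros H. rewrite <- ln_1. apply ln_increasing; lra. Qed.

Definition psi (x : R) : R := (1 + x) * ln (1 + x) / x.

Lemma psi_incr a b : 0 < a -> a < b -> psi a < psi b.
Proof.
  intros Ha Hab.
  apply (incr_aux psi (fun x => (x - ln (1 + x)) / x ^ 2)); auto.
  - intros c Hc. unfold psi. auto_derive.
    + repeat split; lra.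
    + field. lra.
  - intros c Hc. apply Rdiv_lt_0_compat.
    + pose proof (ln_lt_self c); lra.
    + apply pow_lt; lra.
Qed.

Definition h1' (t : R) : R :=
  2 * ln (1 + t) * t ^ 2 * (psi (t ^ 2) - psi t) /
  ((1 + t) * (1 + t ^ 2) * (ln (1 + t ^ 2)) ^ 2).

Lemma h1_deriv c : 0 < c -> is_derive h1 c (h1' c).
Proof.
  intros Hc. unfold h1, h1', psi.
  assert (0 < ln (1 + c ^ 2)) by (apply ln_pos; pose proof (pow_lt c 2 Hc); lra).
  assert (0 < c ^ 2) by (apply pow_lt; lra).
  auto_derive.
  - repeat split; try nra. simpl in *. lra.
  - simpl in *. field. repeat split; nra.
Qed.

Theorem lemma3p7 :
  (forall s t : R, 0 < s -> s < t -> t < 1 -> h1 t < h1 s) /\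
  (forall s t : R, 1 < s -> s < t -> h1 s < h1 t) /\
  (forall t : R, 0 < t <= 1 -> (ln (1 + t)) ^ 2 <= ln (1 + t ^ 2)).
Proof.
  split; [|split].
  - intros s t Hs Hst Ht1.
    assert (H : (fun x => - h1 x) s < (fun x => - h1 x) t).
    2: simpl in H; lra.
    apply (incr_aux (fun x => - h1 x) (fun x => - h1' x)); auto.
        + intros c Hc. apply (is_derive_opp h1 c (h1' c)). apply h1_deriv; lra.
    + intros c Hc. unfold h1'.
      assert (0 < ln (1 + c)) by (apply ln_pos; lra).
      assert (0 < c ^ 2) by (apply pow_lt; lra).
      assert (c ^ 2 < c) by (simpl; nra).
      assert (psi (c ^ 2) < psi c) by (apply psi_incr; lra).
      assert (0 < ln (1 + c ^ 2)) by (apply ln_pos; lra).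
      assert (0 < (1 + c) * (1 + c ^ 2) * ln (1 + c ^ 2) ^ 2).
      { apply Rmult_lt_0_compat; [nra|]. apply pow_lt; lra. }
      rewrite <- Ropp_0. apply Ropp_lt_contravar.
      unfold Rdiv. apply Rmult_neg_pos; [|apply Rinv_0_lt_compat; auto].
      assert (0 < 2 * ln (1 + c) * c ^ 2) by (apply Rmult_lt_0_compat; nra).
      nra.
  - intros s t Hs Hst.
    apply (incr_aux h1 h1'); auto.
    + intros c Hc. apply h1_deriv; lra.
    + intros c Hc. unfold h1'.
      assert (0 < ln (1 + c)) by (apply ln_pos; lra).
      assert (0 < c ^ 2) by (apply pow_lt; lra).
      assert (c < c ^ 2) by (simpl; nra).
      assert (psi c < psi (c ^ 2)) by (apply psi_incr; lra).
      assert (0 < ln (1 + c ^ 2)) by (apply ln_pos; lra).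
      assert (0 < (1 + c) * (1 + c ^ 2) * ln (1 + c ^ 2) ^ 2).
      { apply Rmult_lt_0_compat; [nra|]. apply pow_lt; lra. }
      apply Rdiv_lt_0_compat; auto.
      assert (0 < 2 * ln (1 + c) * c ^ 2) by (apply Rmult_lt_0_compat; nra).
      nra.
  - intros t [Ht Ht1].
    assert (H : (fun x => ln (1 + x ^ 2) - ln (1 + x) ^ 2) 0 <
                (fun x => ln (1 + x ^ 2) - ln (1 + x) ^ 2) t).
    2:{ cbv beta in H. replace (1 + 0 ^ 2) with 1 in H by ring. rewrite Rplus_0_r, ln_1 in H. lra. }
    apply (incr_aux (fun x => ln (1 + x ^ 2) - ln (1 + x) ^ 2) (fun x => 2 * (x * (1 + x) - (1 + x ^ 2) * ln (1 + x))
                                 / ((1 + x) * (1 + x ^ 2)))); auto.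
    + intros c Hc. auto_derive.
      * repeat split; nra.
      * field. nra.
    + intros c Hc.
      pose proof (ln_lt_self c ltac:(lra)).
      apply Rdiv_lt_0_compat; [|nra].
      assert ((1 + c ^ 2) * ln (1 + c) < (1 + c ^ 2) * c)
        by (apply Rmult_lt_compat_l; nra).
      simpl in *. nra.
Qed.
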